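(* Suppose that a domain $\Omega\subset E_k$ is convex with respect to the set of directions $M_u$ and $f_u(E_k)=\mathbb{C}$ for all $u=1,\ldots,m$. Suppose that $\Phi:\Omega\to\mathbb{A}_n^m$ is monogenic in $\Omega$. If $\zeta_1,\zeta_2\in\Omega$ and $\zeta_2-\zeta_1\in M_u$ for some $u\in\{1,\ldots,m\}$, then $\Phi(\zeta_2)-\Phi(\zeta_1)\in\mathcal{I}_u$.
   Context: Fix integers $1\le m\le n$. $\mathbb{A}_n^m$ is an $n$-dimensional commutative associative algebra with unit over $\mathbb{C}$ having a basis $\{I_r\}_{r=1}^n$ with the multiplication rules: (1) for $r,s\in\{1,\ldots,m\}$: $I_rI_s=0$ if $r\ne s$ and $I_rI_r=I_r$; (2) for $r,s\in\{m+1,\ldots,n\}$: $I_rI_s=\sum_{p=\max\{r,s\}+1}^n\Upsilon^s_{r,p}I_p$ with $\Upsilon^s_{r,p}\in\mathbb{C}$; (3) for each $s\in\{m+1,\ldots,n\}$ there is a unique $u_s\in\{1,\ldots,m\}$ such that for all $r\in\{1,\ldots,m\}$: $I_rI_s=I_s$ if $r=u_s$ and $I_rI_s=0$ otherwise. The unit is $\sum_{u=1}^mI_u$. For $u=1,\ldots,m$, $\mathcal{I}_u=\{\sum_{r\ne u}\lambda_rI_r:\lambda_r\in\mathbb{C}\}$ is a maximal ideal and $f_u:\mathbb{A}_n^m\to\mathbb{C}$ is the linear functional $f_u(\sum_r\lambda_rI_r)=\lambda_u$. Let $2\le k\le 2n$ and let $e_1=1$, $e_j=\sum_{r=1}^n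 a_{jr}I_r$ ($j=2,\ldots,k$) be linearly independent over $\mathbb{R}$; $E_k$ is their real linear span, $\zeta=\sum_j x_je_j$ with $x_j\in\mathbb{R}$. $M_u:=\{\zeta\in E_k: f_u(\zeta)=0\}$. A domain $\Omega\subset E_k$ is convex with respect to the set of directions $M_u$ if for all $\zeta_1,\zeta_2\in\Omega$ with $\zeta_2-\zeta_1\in M_u$ the segment $\{\zeta_1+\alpha(\zeta_2-\zeta_1):\alpha\in[0,1]\}$ lies in $\Omega$. A continuous function $\Phi:\Omega\to\mathbb{A}_n^m$ is monogenic in $\Omega$ if for every $\zeta\in\Omega$ there is $\Phi'(\zeta)\in\mathbb{A}_n^m$ with $\lim_{\varepsilon\to0^+}(\Phi(\zeta+\varepsilon h)-\Phi(\zeta))\varepsilon^{-1}=h\Phi'(\zeta)$ for all $h\in E_k$ (Gateaux derivative). *)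

(* Defs.v *)
From mathcomp Require Import all_boot.
From Stdlib Require Import Reals.
Set Implicit Arguments.
Unset Strict Implicit.
Unset Printing Implicit Defensive.

Definition Cx := (R * R)%type.
Definition C0 : Cx := (0%R, 0%R).
Definition C1 : Cx := (1%R, 0%R).
Definition Cadd (a b : Cx) : Cx := (a.1 + b.1, a.2 + b.2)%R.
Definition Copp (a : Cx) : Cx := (- a.1, - a.2)%R.
Definition Cmul (a b : Cx) : Cx := (a.1 * b.1 - a.2 * b.2, a.1 * b.2 + a.2 * b.1)%R.
Definition Cscale (t : R) (a : Cx) : Cx := (t * a.1, t * a.2)%R.
Definition Cnorm (a : Cx) : R := sqrt (a.1 * a.1 + a.2 * a.2)%R.

(* ---------- the algebra A_n^m ----------
   Elements are coordinate vectors w.r.t. the basis I_0,...,I_{n-1}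
   (0-based: paper's I_r is our index r-1; "r in {1..m}" becomes r < m). *)
Definition Alg (n : nat) := 'I_n -> Cx.

Section Algebra.
Variables (n m : nat).
(* us s = u_s (only meaningful for m <= s);  Ups s r p = Upsilon^s_{r,p} *)
Variables (us : 'I_n -> 'I_n) (Ups : 'I_n -> 'I_n -> 'I_n -> Cx).

(* structure constants: I_r I_s = sum_p sc r s p I_p *)
Definition sc (r s p : 'I_n) : Cx :=
  if (r < m) && (s < m) then (if (r == s) && (p == r) then C1 else C0)
  else if (m <= r) && (m <= s) then
         (if maxn r s < p then Ups s r p else C0)
  else if r < m then (if (r == us s) && (p == s) then C1 else C0)
  else (if (s == us r) && (p == r) then C1 else C0).

Definition Aadd (a b : Alg n) : Alg n := fun r => Cadd (a r) (b r).
Definition Asub (a b : Alg n) : Alg n := fun r => Cadd (a r) (Copp (b r)).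
Definition Ascale (t : R) (a : Alg n) : Alg n := fun r => Cscale t (a r).
Definition Amul (a b : Alg n) : Alg n := fun p =>
  \big[Cadd/C0]_(r < n) \big[Cadd/C0]_(s < n) Cmul (Cmul (a r) (b s)) (sc r s p).
Definition Aone : Alg n := fun r => if r < m then C1 else C0.
Definition Anorm (a : Alg n) : R := \big[Rplus/0%R]_(r < n) Cnorm (a r).
Definition f_ (v : 'I_n) (a : Alg n) : Cx := a v.
Definition in_ideal (v : 'I_n) (a : Alg n) : Prop := a v = C0.

Definition is_comm_assoc : Prop :=
  (forall a b p, Amul a b p = Amul b a p) /\
  (forall a b c p, Amul (Amul a b) c p = Amul a (Amul b c) p).

Definition u_ok : Prop := forall s : 'I_n, m <= s -> us s < m.

Variables (k : nat) (e : 'I_k -> Alg n).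

Definition zeta (x : 'I_k -> R) : Alg n :=
  fun r => \big[Cadd/C0]_(j < k) Cscale (x j) (e j r).

Definition inEk (z : Alg n) : Prop := exists x, forall r, z r = zeta x r.

Definition Ek_basis_ok : Prop :=
  (forall j : 'I_k, nat_of_ord j = 0 -> forall r, e j r = Aone r) /\
  (forall x : 'I_k -> R, (forall r, zeta x r = C0) -> forall j, x j = 0%R).

Definition inM (v : 'I_n) (z : Alg n) : Prop := inEk z /\ f_ v z = C0.

Definition open_in_Ek (Om : Alg n -> Prop) : Prop :=
  forall z, Om z -> exists d, (0 < d)%R /\
    forall w, inEk w -> (Anorm (Asub w z) < d)%R -> Om w.

Definition rel_open (Om S : Alg n -> Prop) : Prop :=
  forall z, Om z -> S z -> exists d, (0 < d)%R /\
    forall w, Om w -> (Anorm (Asub w z) < d)%R -> S w.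

Definition connected (Om : Alg n -> Prop) : Prop :=
  ~ exists U V : Alg n -> Prop,
      rel_open Om U /\ rel_open Om V /\
      (forall z, Om z -> U z \/ V z) /\
      (forall z, Om z -> U z -> V z -> False) /\
      (exists z, Om z /\ U z) /\ (exists z, Om z /\ V z).

Definition domain (Om : Alg n -> Prop) : Prop :=
  (forall z, Om z -> inEk z) /\ (exists z, Om z) /\ open_in_Ek Om /\ connected Om.

Definition convex_dir (Om : Alg n -> Prop) (v : 'I_n) : Prop :=
  forall z1 z2, Om z1 -> Om z2 -> inM v (Asub z2 z1) ->
    forall al, (0 <= al <= 1)%R -> Om (Aadd z1 (Ascale al (Asub z2 z1))).

Definition continuous_on (Om : Alg n -> Prop) (Phi : Alg n -> Alg n) : Prop :=
  forall z, Om z -> forall eps, (0 < eps)%R -> exists d, (0 < d)%R /\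
    forall w, Om w -> (Anorm (Asub w z) < d)%R -> (Anorm (Asub (Phi w) (Phi z)) < eps)%R.

Definition monogenic (Om : Alg n -> Prop) (Phi : Alg n -> Alg n) : Prop :=
  continuous_on Om Phi /\
  forall z, Om z -> exists D : Alg n, forall h, inEk h ->
    forall eps, (0 < eps)%R -> exists d, (0 < d)%R /\
      forall t, (0 < t < d)%R ->
        (Anorm (Asub (Ascale (/ t) (Asub (Phi (Aadd z (Ascale t h))) (Phi z)))
                     (Amul h D)) < eps)%R.
End Algebra.

(* Main.v *)
From HB Require Import structures.
Require Import Defs.
From mathcomp Require Import all_boot.
From Stdlib Require Import Reals Lra Classical FunctionalExtensionality.

Section RealPart.
Local Open Scope R_scope.
Lemma Rplus_assoc' : associative Rplus.
Proof. move=> x y z; ring. Qed.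
HB.instance Definition _ := Monoid.isComLaw.Build R 0%R Rplus Rplus_assoc' Rplus_comm Rplus_0_l.

Lemma Cnorm_ge0 a : 0 <= Cnorm a.
Proof. apply sqrt_pos. Qed.

Lemma Cnorm_ge1 a : Rabs a.1 <= Cnorm a.
Proof.
rewrite /Cnorm -sqrt_Rsqr_abs; apply sqrt_le_1_alt; rewrite /Rsqr.
have := Rle_0_sqr a.2; rewrite /Rsqr; lra.
Qed.

Lemma Cnorm_ge2 a : Rabs a.2 <= Cnorm a.
Proof.
rewrite /Cnorm -sqrt_Rsqr_abs; apply sqrt_le_1_alt; rewrite /Rsqr.
have := Rle_0_sqr a.1; rewrite /Rsqr; lra.
Qed.

Lemma Anorm_ge n (a : Alg n) v : Cnorm (a v) <= Anorm a.
Proof.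
rewrite /Anorm (bigD1 v) //=.
have : 0 <= \big[Rplus/0]_(i < n | i != v) Cnorm (a i).
  apply: (big_rec (fun x => 0 <= x)); first lra.
  move=> i x _ Hx; have := Cnorm_ge0 (a i); lra.
move=> H. rewrite -{1}(Rplus_0_r (Cnorm (a v))); apply Rplus_le_compat_l; exact H.
Qed.

Lemma Cnorm_scale t a : Cnorm (Cscale t a) = Rabs t * Cnorm a.
Proof.
rewrite /Cnorm /Cscale /= -sqrt_Rsqr_abs -sqrt_mult_alt; last by apply Rle_0_sqr.
f_equal; rewrite /Rsqr; ring.
Qed.

Lemma Anorm_scale n (a b : Alg n) t : (forall r, a r = Cscale t (b r)) -> Anorm a = Rabs t * Anorm b.
Proof.
move=> H; rewrite /Anorm.
apply: (big_rec2 (fun y1 y2 => y1 = Rabs t * y2)); first ring.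
move=> i y1 y2 _ ->; rewrite H Cnorm_scale; ring.
Qed.
Lemma zero_rderiv (f : R -> R) :
  (forall a, 0 <= a <= 1 -> forall eps, 0 < eps -> exists d, 0 < d /\
     forall b, 0 <= b <= 1 -> Rabs (b - a) < d -> Rabs (f b - f a) < eps) ->
  (forall a, 0 <= a < 1 -> forall eps, 0 < eps -> exists d, 0 < d /\
     forall t, 0 < t < d -> Rabs (f (a + t) - f a) < eps * t) ->
  f 1 = f 0.
Proof.
intros Hc Hd.
assert (Main : forall eps, 0 < eps -> Rabs (f 1 - f 0) <= eps).
{ intros eps Heps.
  set (E := fun x => 0 <= x <= 1 /\ forall y, 0 <= y <= x -> Rabs (f y - f 0) <= eps * y).
  assert (E0 : E 0).
  { split; [lra|]. intros y Hy. replace y with 0 by lra.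
    unfold Rminus; rewrite Rplus_opp_r Rabs_R0; lra. }
  assert (Eb : bound E). { exists 1. intros x [Hx _]; lra. }
  destruct (completeness E Eb (ex_intro _ 0 E0)) as [s [Hub Hlub]].
  assert (Hs0 : 0 <= s) by (apply Hub; exact E0).
  assert (Hs1 : s <= 1) by (apply Hlub; intros x [Hx _]; lra).
  assert (A : forall y, 0 <= y < s -> Rabs (f y - f 0) <= eps * y).
  { intros y Hy. destruct (classic (exists x, E x /\ y < x)) as [[x [[_ Hx] Hyx]]|Hn].
    - apply Hx; lra.
    - exfalso. assert (y >= s).
      { apply Rle_ge, Hlub. intros x Ex. apply Rnot_lt_le. intro Hlt. apply Hn; eauto. }
      lra. }
  assert (B : Rabs (f s - f 0) <= eps * s).
  { destruct (Req_dec s 0) as [->|Hsn].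
    - unfold Rminus; rewrite Rplus_opp_r Rabs_R0; lra.
    - apply Rnot_lt_le; intro Hlt.
      set (eta := Rabs (f s - f 0) - eps * s).
      destruct (Hc s (conj Hs0 Hs1) eta ltac:(unfold eta; lra)) as [d [Hd0 Hdd]].
      set (y := s - Rmin d s / 2).
      assert (Hm1 : 0 < Rmin d s) by (apply Rmin_pos; lra).
      assert (Hm2 : Rmin d s <= d) by apply Rmin_l.
      assert (Hm3 : Rmin d s <= s) by apply Rmin_r.
      assert (Hy1 : 0 <= y < s) by (unfold y; lra).
      assert (H1 := A y Hy1).
      assert (H2 : Rabs (f y - f s) < eta).
      { apply Hdd; [unfold y; lra|]. unfold y. rewrite Rabs_left; lra. }
      assert (H3 : Rabs (f s - f 0) <= Rabs (f s - f y) + Rabs (f y - f 0)).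
      { replace (f s - f 0) with ((f s - f y) + (f y - f 0)) by ring. apply Rabs_triang. }
      rewrite Rabs_minus_sym in H2. unfold eta in H2.
      assert (eps * y <= eps * s) by (apply Rmult_le_compat_l; lra).
      lra. }
  assert (Es : E s).
  { split; [lra|]. intros y Hy. destruct (Req_dec y s) as [->|]; [exact B|]. apply A; lra. }
  assert (Hs : s = 1).
  { destruct (Rle_lt_or_eq_dec s 1 Hs1) as [Hsn|]; [exfalso|assumption].
    assert (Hsi : 0 <= s < 1) by lra.
    destruct (Hd s Hsi eps Heps) as [d [Hd0 Hdd]].
    set (t := Rmin (d / 2) (1 - s)).
    assert (Ht1 : 0 < t) by (apply Rmin_pos; lra).
    assert (Ht2 : t <= d / 2) by apply Rmin_l.
    assert (Ht3 : t <= 1 - s) by apply Rmin_r.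
    assert (Et : E (s + t)).
    { split; [lra|]. intros y Hy. destruct (Rle_dec y s) as [Hys|Hys].
      - destruct Es as [_ Es]; apply Es; lra.
      - assert (H1 := Hdd (y - s) ltac:(lra)).
        replace (s + (y - s)) with y in H1 by ring.
        assert (H3 : Rabs (f y - f 0) <= Rabs (f y - f s) + Rabs (f s - f 0)).
        { replace (f y - f 0) with ((f y - f s) + (f s - f 0)) by ring. apply Rabs_triang. }
        lra. }
    assert (s + t <= s) by (apply Hub; exact Et). lra. }
  rewrite Hs in Es. destruct Es as [_ Es]. specialize (Es 1 ltac:(lra)). lra. }
destruct (Req_dec (f 1 - f 0) 0) as [H|H]; [lra|].
assert (Hp : 0 < Rabs (f 1 - f 0)) by (apply Rabs_pos_lt; exact H).
specialize (Main (Rabs (f 1 - f 0) / 2) ltac:(lra)). lra.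
Qed.
End RealPart.
Lemma sc_v0 n m us Ups (r s v : 'I_n) : v < m -> r != v -> sc m us Ups r s v = C0.
Proof.
move=> Hv Hrv.
have Hvr : (v == r) = false by rewrite eq_sym; apply/negbTE.
rewrite /sc Hvr !andbF /=.
case: ifP => // H1.
case: ifP => [/andP[Hmr _]|_].
  have -> : (maxn r s < v) = false.
    apply/negbTE; rewrite -leqNgt; apply: leq_trans (leq_maxl r s).
    by apply: leq_trans Hmr; apply: ltnW.
  by [].
case: ifP => // Hr.
have -> : (v == s) = false.
  apply/negbTE/eqP => Evs; move: H1; by rewrite Hr -Evs Hv.
by rewrite andbF.
Qed.

Lemma Cmul0r y z : Cmul (Cmul C0 y) z = C0.
Proof. rewrite /Cmul /C0 /=; f_equal; ring. Qed.
Lemma Cmulr0 y : Cmul y C0 = C0.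
Proof. rewrite /Cmul /C0 /=; f_equal; ring. Qed.
Lemma Cadd00 : Cadd C0 C0 = C0.
Proof. rewrite /Cadd /C0 /=; f_equal; ring. Qed.

Lemma Amul_v0 n m us Ups (h D : Alg n) (v : 'I_n) : v < m -> h v = C0 -> Amul m us Ups h D v = C0.
Proof.
move=> Hv Hh; rewrite /Amul.
apply: (big_rec (fun x => x = C0)) => // r x _ ->.
have -> : \big[Cadd/C0]_(s < n) Cmul (Cmul (h r) (D s)) (sc m us Ups r s v) = C0.
  apply: (big_rec (fun x => x = C0)) => // s y _ ->.
  case: (eqVneq r v) => [->|Hrv]; first by rewrite Hh Cmul0r Cadd00.
  by rewrite sc_v0 // Cmulr0 Cadd00.
exact: Cadd00.
Qed.

Theorem lemma2
  (n m : nat) (Hm : 1 <= m) (Hmn : m <= n)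
  (us : 'I_n -> 'I_n) (Ups : 'I_n -> 'I_n -> 'I_n -> Cx)
  (Hus : u_ok m us) (Halg : is_comm_assoc m us Ups)
  (k : nat) (Hk : 2 <= k) (Hk2 : k <= 2 * n)
  (e : 'I_k -> Alg n) (He : Ek_basis_ok m e)
  (Om : Alg n -> Prop) (HOm : domain e Om)
  (Hconv : forall v : 'I_n, v < m -> convex_dir e Om v)
  (Hsurj : forall v : 'I_n, v < m -> forall c : Cx, exists z, inEk e z /\ f_ v z = c)
  (Phi : Alg n -> Alg n) (HPhi : monogenic m us Ups e Om Phi) :
  forall (z1 z2 : Alg n) (v : 'I_n), v < m ->
    Om z1 -> Om z2 -> inM e v (Asub z2 z1) ->
    in_ideal v (Asub (Phi z2) (Phi z1)).
Proof.
move=> z1 z2 v Hv Oz1 Oz2 HM.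
set h := Asub z2 z1.
have [Hh Hhv] := HM.
rewrite /f_ in Hhv.
pose g (a : R) := Aadd z1 (Ascale a h).
have Hg : forall a, (0 <= a <= 1)%R -> Om (g a).
  by move=> a Ha; apply: (Hconv v Hv z1 z2 Oz1 Oz2 HM).
have Hg0 : g 0%R = z1.
  apply: functional_extensionality => r; rewrite /g /Aadd /Ascale /Cadd /Cscale /=.
  by case: (z1 r) => a b /=; f_equal; ring.
have Hg1 : g 1%R = z2.
  apply: functional_extensionality => r; rewrite /g /h /Aadd /Ascale /Asub /Cadd /Cscale /Copp /=.
  by case: (z1 r) => a b; case: (z2 r) => c d /=; f_equal; ring.
have Hgadd : forall a t, Aadd (g a) (Ascale t h) = g (a + t)%R.
  move=> a t; apply: functional_extensionality => r; rewrite /g /Aadd /Ascale /Cadd /Cscale /=.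
  by case: (z1 r) => a1 b1; case: (h r) => c d /=; f_equal; ring.
have Hgsub : forall a b r, Asub (g b) (g a) r = Cscale (b - a) (h r).
  move=> a b r; rewrite /g /Aadd /Asub /Ascale /Cadd /Cscale /Copp /=.
  by case: (z1 r) => a1 b1; case: (h r) => c d /=; f_equal; ring.
have HD : forall D, Amul m us Ups h D v = C0 by move=> D; apply: Amul_v0.
have key : forall pr : Cx -> R,
    (forall x, (Rabs (pr x) <= Cnorm x)%R) ->
    (forall x y, pr (Cadd x (Copp y)) = (pr x - pr y)%R) ->
    (forall t x, pr (Cscale t x) = (t * pr x)%R) ->
    pr C0 = 0%R ->
    pr (Phi z2 v) = pr (Phi z1 v).
  move=> pr Hpr Hsub Hsc H0.
  pose psi a := pr (Phi (g a) v).
  have := @zero_rderiv psi.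
  rewrite /psi Hg0 Hg1; apply.
  - move=> a Ha eps Heps.
    have [d [Hd Hdd]] := (proj1 HPhi) (g a) (Hg a Ha) eps Heps.
    have HA : (0 <= Anorm h)%R.
      rewrite /Anorm; apply: (big_rec (fun x => 0 <= x)%R); first lra.
      move=> i x _ Hx; have := Cnorm_ge0 (h i); lra.
    exists (d / (Anorm h + 1))%R; split.
      apply: Rdiv_lt_0_compat; lra.
    move=> b Hb Hba.
    have Hn : (Anorm (Asub (g b) (g a)) < d)%R.
      rewrite (@Anorm_scale _ _ h (b - a)%R); last exact: Hgsub.
      have H1 : (Rabs (b - a) * (Anorm h + 1) < d)%R.
        have := Rmult_lt_compat_r (Anorm h + 1) _ _ ltac:(lra) Hba.
        by rewrite /Rdiv Rmult_assoc Rinv_l; [rewrite Rmult_1_r|lra].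
      have := Rabs_pos (b - a); nra.
    have := Hdd (g b) (Hg b Hb) Hn.
    have := Anorm_ge _ (Asub (Phi (g b)) (Phi (g a))) v.
    have := Hpr (Asub (Phi (g b)) (Phi (g a)) v).
    rewrite /Asub Hsub; lra.
  - move=> a Ha eps Heps.
    have Ha' : (0 <= a <= 1)%R by lra.
    have [D HDD] := (proj2 HPhi) (g a) (Hg a Ha').
    have [d [Hd Hdd]] := HDD h Hh eps Heps.
    exists d; split => // t Ht.
    have := Hdd t Ht.
    rewrite Hgadd => Hlt.
    have := Anorm_ge _ (Asub (Ascale (/ t) (Asub (Phi (g (a + t)%R)) (Phi (g a)))) (Amul m us Ups h D)) v.
    move=> H2.
    have H1 := Hpr (Asub (Ascale (/ t) (Asub (Phi (g (a + t)%R)) (Phi (g a)))) (Amul m us Ups h D) v).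
    have E : pr (Asub (Ascale (/ t) (Asub (Phi (g (a + t)%R)) (Phi (g a)))) (Amul m us Ups h D) v)
       = (/ t * (pr (Phi (g (a + t)%R) v) - pr (Phi (g a) v)) - 0)%R.
      by rewrite /Asub /Ascale Hsub Hsc Hsub HD H0.
    have H3 : (Rabs (/ t * (pr (Phi (g (a + t)%R) v) - pr (Phi (g a) v))) < eps)%R by rewrite E Rminus_0_r in H1; lra.
    rewrite Rabs_mult Rabs_inv (Rabs_pos_eq t) in H3; last lra.
    set X := Rabs _ in H3 *.
    have Ht0 : (0 < t)%R by lra.
    have -> : X = (t * (/ t * X))%R by field; lra.
    rewrite (Rmult_comm eps t); apply: Rmult_lt_compat_l => //.
have E1 := key fst (fun x => Rle_trans _ _ _ (Rle_refl _) (Cnorm_ge1 x))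
  (fun x y => erefl) (fun t x => erefl) erefl.
have E2 := key snd (fun x => Rle_trans _ _ _ (Rle_refl _) (Cnorm_ge2 x))
  (fun x y => erefl) (fun t x => erefl) erefl.
rewrite /in_ideal /Asub /Cadd /Copp /C0 /=.
f_equal; rewrite ?E1 ?E2; ring.
Qed.
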